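(* For every angle $0<\alpha<\pi$ there is $p_0(\alpha)$ such that for every prime $p>p_0(\alpha)$ the isosceles triangle whose angle at the apex (between the two equal sides) equals $\alpha$ is Euclidean sub-$p$-toral.
   Context: A $p$-torus is a group isomorphic to $(\mathbb{Z}_p)^\alpha$ for some $\alpha\ge1$. A set $X\subset\mathbb{R}^k$ is Euclidean sub-$p$-toral if there exist $n\ge k$, a $p$-torus $G$ and an action of $G$ on $\mathbb{R}^n$ by isometries such that $X$ (viewed in $\mathbb{R}^n$ via the standard inclusion $\mathbb{R}^k\subset\mathbb{R}^n$) is contained in a single $G$-orbit. A triangle is identified with its set of three vertices; being sub-$p$-toral is invariant under isometries. *)

(* Defs.v *)
From HB Require Import structures.
From mathcomp Require Import all_boot all_order all_algebra.
From mathcomp Require Import all_classical all_reals all_analysis.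
Set Implicit Arguments. Unset Strict Implicit. Unset Printing Implicit Defensive.
Import Order.TTheory GRing.Theory Num.Theory.
Local Open Scope ring_scope.
Local Open Scope classical_set_scope.

Section Defs.
Variable R : realType.

Definition dotp (n : nat) (x y : 'rV[R]_n) : R := \sum_(i < n) x 0 i * y 0 i.
Definition euclid_dist (n : nat) (x y : 'rV[R]_n) : R := Num.sqrt (dotp (x - y) (x - y)).

Definition angle_at (n : nat) (a b c : 'rV[R]_n) : R :=
  acos (dotp (b - a) (c - a) / (euclid_dist b a * euclid_dist c a)).

Definition std_incl (k n : nat) (y : 'rV[R]_k) : 'rV[R]_n :=
  \row_(i < n) oapp (fun j : 'I_k => y 0 j) 0 (insub (nat_of_ord i)).

Definition isometric_action (G : zmodType) (n : nat) (act : G -> 'rV[R]_n -> 'rV[R]_n) : Prop :=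
  [/\ (forall x, act 0 x = x),
      (forall g h x, act (g + h) x = act g (act h x)) &
      (forall g x y, euclid_dist (act g x) (act g y) = euclid_dist x y)].

(* X is Euclidean sub-p-toral: the p-torus (Z_p)^alpha, alpha >= 1, realised
   concretely as {ffun 'I_alpha -> 'Z_p} (used only for prime p) *)
Definition euclidean_sub_p_toral (p k : nat) (X : set 'rV[R]_k) : Prop :=
  exists (n : nat) (alpha : nat)
         (act : {ffun 'I_alpha -> 'Z_p} -> 'rV[R]_n -> 'rV[R]_n),
    [/\ (k <= n)%N, (1 <= alpha)%N, isometric_action act &
        exists x0 : 'rV[R]_n, forall y, X y -> exists g, act g x0 = std_incl n y].

End Defs.

(* Main.v *)
Require Import Defs.
From HB Require Import structures.
From mathcomp Require Import all_boot all_order all_algebra.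
From mathcomp Require Import all_classical all_reals all_analysis.
From mathcomp Require Import ring lra.
Import Order.TTheory GRing.Theory Num.Theory.
Set Implicit Arguments. Unset Strict Implicit. Unset Printing Implicit Defensive.
Local Open Scope ring_scope.
Local Open Scope classical_set_scope.

Section Dot.
Variable R : realType.
Variable n : nat.
Implicit Types x y z : 'rV[R]_n.

Lemma dotpC x y : dotp x y = dotp y x.
Proof. by apply: eq_bigr => i _; rewrite mulrC. Qed.
Lemma dotpDl x y z : dotp (x + y) z = dotp x z + dotp y z.
Proof. by rewrite /dotp -big_split; apply: eq_bigr => i _; rewrite mxE mulrDl. Qed.
Lemma dotpZl a x y : dotp (a *: x) y = a * dotp x y.
Proof. by rewrite /dotp mulr_sumr; apply: eq_bigr => i _; rewrite mxE mulrA. Qed.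
Lemma dotpNl x y : dotp (- x) y = - dotp x y.
Proof. by rewrite -scaleN1r dotpZl mulN1r. Qed.
Lemma dotpBl x y z : dotp (x - y) z = dotp x z - dotp y z.
Proof. by rewrite dotpDl dotpNl. Qed.
Lemma dotpDr x y z : dotp z (x + y) = dotp z x + dotp z y.
Proof. by rewrite !(dotpC z) dotpDl. Qed.
Lemma dotpZr a x y : dotp y (a *: x) = a * dotp y x.
Proof. by rewrite !(dotpC y) dotpZl. Qed.
Lemma dotpNr x y : dotp y (- x) = - dotp y x.
Proof. by rewrite !(dotpC y) dotpNl. Qed.
Lemma dotpBr x y z : dotp z (x - y) = dotp z x - dotp z y.
Proof. by rewrite dotpDr dotpNr. Qed.
Lemma dotp0l x : dotp 0 x = 0.
Proof. by rewrite -(scale0r 0) dotpZl mul0r. Qed.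
Lemma dotp0r x : dotp x 0 = 0.
Proof. by rewrite dotpC dotp0l. Qed.
Lemma dotpxx_ge0 x : 0 <= dotp x x.
Proof. by apply: sumr_ge0 => i _; rewrite -expr2 sqr_ge0. Qed.
Lemma dotpxx_eq0 x : dotp x x = 0 -> x = 0.
Proof.
move=> /eqP; rewrite psumr_eq0 => [/allP H|i _]; last by rewrite -expr2 sqr_ge0.
apply/rowP => i; rewrite mxE; apply/eqP; rewrite -sqrf_eq0 expr2.
by apply: (H i); rewrite mem_index_enum.
Qed.
End Dot.
Section Rot.
Variable R : realType.
Variable n : nat.
Implicit Types x y z X Y : 'rV[R]_n.

Definition rot X Y (phi : R) x : 'rV[R]_n :=
  x + (((cos phi - 1) * dotp x X - sin phi * dotp x Y) *: X
       + ((cos phi - 1) * dotp x Y + sin phi * dotp x X) *: Y).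

Ltac dsimp := rewrite ?(dotpDl, dotpDr, dotpBl, dotpBr, dotpZl, dotpZr, dotpNl, dotpNr, dotp0l, dotp0r).

Variables X Y : 'rV[R]_n.
Hypotheses (hXX : dotp X X = 1) (hYY : dotp Y Y = 1) (hXY : dotp X Y = 0).
Let hYX : dotp Y X = 0. Proof. by rewrite dotpC. Qed.

Lemma rot_dotX phi x : dotp (rot X Y phi x) X = cos phi * dotp x X - sin phi * dotp x Y.
Proof. rewrite /rot; dsimp; rewrite hXX hYX; ring. Qed.
Lemma rot_dotY phi x : dotp (rot X Y phi x) Y = cos phi * dotp x Y + sin phi * dotp x X.
Proof. rewrite /rot; dsimp; rewrite hYY hXY; ring. Qed.

Lemma rot_dotO Z phi x : dotp X Z = 0 -> dotp Y Z = 0 -> dotp (rot X Y phi x) Z = dotp x Z.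
Proof. move=> h1 h2; rewrite /rot; dsimp; rewrite h1 h2; ring. Qed.

Lemma rotD phi psi x : rot X Y phi (rot X Y psi x) = rot X Y (phi + psi) x.
Proof.
rewrite {1}/rot rot_dotX rot_dotY /rot cosD sinD -!addrA; congr (_ + _).
idtac.
rewrite addrA addrACA -!scalerDl; congr (_ *: _ + _ *: _); ring.
Qed.

Lemma rot0 x : rot X Y 0 x = x.
Proof. by rewrite /rot cos0 sin0 subrr !mul0r !add0r ?subr0 ?oppr0 !scale0r !addr0. Qed.

Lemma rotB phi x y : rot X Y phi (x - y) = rot X Y phi x - rot X Y phi y.
Proof. rewrite /rot; dsimp; apply/rowP => i; rewrite !mxE; ring. Qed.

Lemma rot_norm phi x : dotp (rot X Y phi x) (rot X Y phi x) = dotp x x.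
Proof.
rewrite /rot; dsimp; rewrite hXX hYY hXY hYX (dotpC X x) (dotpC Y x).
have h := cos2Dsin2 phi.
move: (cos phi) (sin phi) (dotp x X) (dotp x Y) (dotp x x) h => c s p q r h.
apply/eqP; rewrite -subr_eq0; apply/eqP.
transitivity ((c^+2+s^+2-1)*(p^+2+q^+2)); first ring.
by rewrite h subrr mul0r.
Qed.

Lemma rot_per phi m x : rot X Y (phi + (pi *+ 2) *+ m) x = rot X Y phi x.
Proof. by rewrite /rot (periodicn (@cosD2pi R)) (periodicn (@sinD2pi R)). Qed.

End Rot.

Lemma rot_comm (R : realType) n (X Y Z W : 'rV[R]_n) phi psi x :
  dotp X Z = 0 -> dotp X W = 0 -> dotp Y Z = 0 -> dotp Y W = 0 ->
  rot X Y phi (rot Z W psi x) = rot Z W psi (rot X Y phi x).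
Proof.
move=> h1 h2 h3 h4.
have e1 : dotp Z X = 0 by rewrite dotpC.
have e2 : dotp W X = 0 by rewrite dotpC.
have e3 : dotp Z Y = 0 by rewrite dotpC.
have e4 : dotp W Y = 0 by rewrite dotpC.
rewrite {1}/rot !(rot_dotO _ _ e1 e2) !(rot_dotO _ _ e3 e4).
rewrite [in RHS]/rot !(rot_dotO _ _ h1 h3) !(rot_dotO _ _ h2 h4).
rewrite /rot; apply/rowP => i; rewrite !mxE; ring.
Qed.

Section Act.
Variable R : realType.
Variables (n p : nat).
Variables X Y Z W z : 'rV[R]_n.
Hypotheses (hXX : dotp X X = 1) (hYY : dotp Y Y = 1) (hXY : dotp X Y = 0)
  (hZZ : dotp Z Z = 1) (hWW : dotp W W = 1) (hZW : dotp Z W = 0)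
  (hXZ : dotp X Z = 0) (hXW : dotp X W = 0) (hYZ : dotp Y Z = 0) (hYW : dotp Y W = 0).

Let m := (Zp_trunc p).+2.
Definition theta : R := pi *+ 2 / m%:R.

Definition actf (g : {ffun 'I_2 -> 'Z_p}) (x : 'rV[R]_n) : 'rV[R]_n :=
  z + rot X Y (theta * (g ord0)%:R) (rot Z W (theta * (g ord_max)%:R) (x - z)).

Lemma rot_mod (A B : 'rV[R]_n) k x : rot A B (theta * (k %% m)%:R) x = rot A B (theta * k%:R) x.
Proof.
rewrite -(rot_per _ _ _ (k %/ m)); congr rot.
rewrite [X in _ = theta * X%:R](divn_eq k m) natrD natrM /theta -mulr_natr.
have hm : (m%:R : R) != 0 by rewrite pnatr_eq0.
by field.
Qed.

Lemma actfD g h x : actf (g + h) x = actf g (actf h x).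
Proof.
rewrite /actf !ffunE /= addrAC subrr add0r.
rewrite !rot_mod -(rot_comm _ _ _ hXZ hXW hYZ hYW).
rewrite (rotD hXX hYY hXY) (rotD hZZ hWW hZW).
by rewrite !natrD !mulrDr.
Qed.

Lemma actf_iso : isometric_action actf.
Proof.
split.
- move=> x; rewrite /actf !ffunE /= !mulr0 !rot0.
  by rewrite addrC subrK.
- exact: actfD.
- move=> g x y; rewrite /euclid_dist; congr Num.sqrt.
  rewrite /actf opprD addrACA subrr add0r -!rotB.
  rewrite !(rot_norm hXX hYY hXY) !(rot_norm hZZ hWW hZW).
  by rewrite opprB addrA subrK.
Qed.
Lemma actf_orbit (g : {ffun 'I_2 -> 'Z_p}) (s t : R) :
  let phi := theta * (g ord0)%:R in let psi := theta * (g ord_max)%:R in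
  actf g (z + (s *: X + t *: Z)) =
  z + ((s * cos phi) *: X + (s * sin phi) *: Y + (t * cos psi) *: Z + (t * sin psi) *: W).
Proof.
move=> phi psi; rewrite /actf addrAC subrr add0r; congr (_ + _).
have hZX : dotp Z X = 0 by rewrite dotpC.
have hWX : dotp W X = 0 by rewrite dotpC.
have hZY : dotp Z Y = 0 by rewrite dotpC.
have hWY : dotp W Y = 0 by rewrite dotpC.
have hWZ : dotp W Z = 0 by rewrite dotpC.
rewrite /rot; rewrite ?(dotpDl, dotpDr, dotpZl, dotpZr).
rewrite ?hXX ?hYY ?hXY ?hZZ ?hWW ?hZW ?hXZ ?hXW ?hYZ ?hYW ?hZX ?hWX ?hZY ?hWY ?hWZ.
apply/rowP => i; rewrite !mxE; ring.
Qed.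
End Act.
Ltac dsimp := rewrite ?(dotpDl, dotpDr, dotpBl, dotpBr, dotpZl, dotpZr, dotpNl, dotpNr, dotp0l, dotp0r).

Lemma core (R : realType) n (P Q f1 f2 : 'rV[R]_n) (c sn : R) :
  dotp P Q = 0 -> dotp P f1 = 0 -> dotp P f2 = 0 -> dotp Q f1 = 0 -> dotp Q f2 = 0 ->
  dotp f1 f2 = 0 -> dotp f1 f1 = 1 -> dotp f2 f2 = 1 ->
  0 < dotp P P -> 0 < dotp Q Q -> 0 < sn -> c ^+ 2 + sn ^+ 2 = 1 ->
  dotp Q Q * (1 - c) <= dotp P P * (1 + c) ->
  exists X Y Z W : 'rV[R]_n, exists s t : R,
    [/\ [/\ dotp X X = 1, dotp Y Y = 1, dotp X Y = 0, dotp Z Z = 1 & dotp W W = 1],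
        [/\ dotp Z W = 0, dotp X Z = 0, dotp X W = 0, dotp Y Z = 0 & dotp Y W = 0],
        ((c - 1) * s) *: X + ((c - 1) * t) *: Z + (sn * t) *: W = P &
        (sn * s) *: Y = Q].
Proof.
move=> hPQ hP1 hP2 hQ1 hQ2 h12 h11 h22 hPP hQQ hsn hcs hcond.
have hQP : dotp Q P = 0 by rewrite dotpC.
have h1P : dotp f1 P = 0 by rewrite dotpC.
have h2P : dotp f2 P = 0 by rewrite dotpC.
have h1Q : dotp f1 Q = 0 by rewrite dotpC.
have h2Q : dotp f2 Q = 0 by rewrite dotpC.
have h21 : dotp f2 f1 = 0 by rewrite dotpC.
set hh := dotp P P in hPP hcond *.
set qq := dotp Q Q in hQQ hcond *.
have hc1 : c < 1.
  rewrite ltNge; apply/negP => hc.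
  have : 1 <= c ^+ 2 by rewrite -[1](expr1n _ 2) lerXn2r ?nnegrE //; lra.
  have : 0 < sn ^+ 2 by rewrite exprn_gt0.
  lra.
have hcm1 : -1 < c.
  rewrite ltNge; apply/negP => hc.
  have : 1 <= c ^+ 2 by rewrite -sqrrN -[1](expr1n _ 2) lerXn2r ?nnegrE //; lra.
  have : 0 < sn ^+ 2 by rewrite exprn_gt0.
  lra.
pose h := Num.sqrt hh; pose q := Num.sqrt qq.
have hh2 : h ^+ 2 = hh by rewrite sqr_sqrtr // ltW.
have qq2 : q ^+ 2 = qq by rewrite sqr_sqrtr // ltW.
have hpos : 0 < h by rewrite sqrtr_gt0.
have qpos : 0 < q by rewrite sqrtr_gt0.
pose s := q / sn.
pose A := s * (1 - c).
have hA : A ^+ 2 <= hh.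
  have sn2 : sn ^+ 2 = (1 - c) * (1 + c).
    apply/eqP; rewrite -subr_eq0; apply/eqP.
    transitivity (c ^+ 2 + sn ^+ 2 - 1); first ring.
    by rewrite hcs subrr.
  have n1 : 1 - c != 0 by rewrite subr_eq0 gt_eqF.
  have n2 : 1 + c != 0 by apply/eqP => e; move: hcm1; lra.
  have eA : A ^+ 2 = qq * (1 - c) / (1 + c).
    rewrite /A /s !exprMn qq2 exprVn sn2; field; exact/andP.
  by rewrite eA ler_pdivrMr //; lra.
pose B := Num.sqrt (hh - A ^+ 2).
have B2 : B ^+ 2 = hh - A ^+ 2 by rewrite sqr_sqrtr // subr_ge0.
pose L := Num.sqrt ((1 - c) ^+ 2 + sn ^+ 2).
have L2 : L ^+ 2 = (1 - c) ^+ 2 + sn ^+ 2.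
  by rewrite sqr_sqrtr // addr_ge0 // sqr_ge0.
have Lpos : 0 < L by rewrite sqrtr_gt0 ltr_pwDr ?exprn_gt0 ?sqr_ge0.
have [Yv eY] : exists Yv : 'rV[R]_n, Yv = q^-1 *: Q by eexists.
have [Xv eX] : exists Xv : 'rV[R]_n, Xv = (- A / hh) *: P + (B / h) *: f1 by eexists.
have [Vv eV] : exists Vv : 'rV[R]_n, Vv = (B / hh) *: P + (A / h) *: f1 by eexists.
have [Zv eZ] : exists Zv : 'rV[R]_n, Zv = ((c - 1) / L) *: Vv - (sn / L) *: f2 by eexists.
have [Wv eW] : exists Wv : 'rV[R]_n, Wv = (sn / L) *: Vv + ((c - 1) / L) *: f2 by eexists.
pose t := B / L.
have hne : h != 0 by rewrite gt_eqF.
have hhne : hh != 0 by rewrite gt_eqF.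
have qne : q != 0 by rewrite gt_eqF.
have Lne : L != 0 by rewrite gt_eqF.
have snne : sn != 0 by rewrite gt_eqF.
have YY : dotp Yv Yv = 1.
  by rewrite eY; dsimp; rewrite -/qq -qq2; field.
have XX : dotp Xv Xv = 1.
  rewrite eX; dsimp; rewrite hP1 h1P h11 -/hh.
  apply/eqP; rewrite -subr_eq0; apply/eqP.
  transitivity ((B ^+ 2 - (hh - A ^+ 2)) / hh); last by rewrite B2 subrr mul0r.
  by rewrite -hh2; field.
have XY : dotp Xv Yv = 0.
  by rewrite eX eY; dsimp; rewrite hPQ h1Q; ring.
have VV : dotp Vv Vv = 1.
  rewrite eV; dsimp; rewrite hP1 h1P h11 -/hh.
  apply/eqP; rewrite -subr_eq0; apply/eqP.
  transitivity ((B ^+ 2 - (hh - A ^+ 2)) / hh); last by rewrite B2 subrr mul0r.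
  by rewrite -hh2; field.
have XV : dotp Xv Vv = 0.
  by rewrite eX eV; dsimp; rewrite hP1 h1P h11 -/hh -hh2; field.
have YV : dotp Yv Vv = 0 by rewrite eY eV; dsimp; rewrite hQP hQ1; ring.
have Y2 : dotp Yv f2 = 0 by rewrite eY; dsimp; rewrite hQ2; ring.
have X2 : dotp Xv f2 = 0 by rewrite eX; dsimp; rewrite hP2 h12; ring.
have V2 : dotp Vv f2 = 0 by rewrite eV; dsimp; rewrite hP2 h12; ring.
have VX : dotp Vv Xv = 0 by rewrite dotpC.
have VY : dotp Vv Yv = 0 by rewrite dotpC.
have f2V : dotp f2 Vv = 0 by rewrite dotpC.
have ZZ : dotp Zv Zv = 1.
  rewrite eZ; dsimp; rewrite VV V2 f2V h22.
  apply/eqP; rewrite -subr_eq0; apply/eqP.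
  transitivity (((1 - c) ^+ 2 + sn ^+ 2 - L ^+ 2) / L ^+ 2); first by field.
  by rewrite L2 subrr mul0r.
have WW : dotp Wv Wv = 1.
  rewrite eW; dsimp; rewrite VV V2 f2V h22.
  apply/eqP; rewrite -subr_eq0; apply/eqP.
  transitivity (((1 - c) ^+ 2 + sn ^+ 2 - L ^+ 2) / L ^+ 2); first by field.
  by rewrite L2 subrr mul0r.
have ZW : dotp Zv Wv = 0.
  by rewrite eZ eW; dsimp; rewrite VV V2 f2V h22; field.
have XZ : dotp Xv Zv = 0 by rewrite eZ; dsimp; rewrite XV X2; ring.
have XW : dotp Xv Wv = 0 by rewrite eW; dsimp; rewrite XV X2; ring.
have YZ : dotp Yv Zv = 0 by rewrite eZ; dsimp; rewrite YV Y2; ring.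
have YW : dotp Yv Wv = 0 by rewrite eW; dsimp; rewrite YV Y2; ring.
exists Xv, Yv, Zv, Wv, s, t; split => //.
- pose M := (c - 1) ^+ 2 + sn ^+ 2.
  pose a := (c - 1) * s * (- A / hh) + ((c - 1) * t * ((c - 1) / L) + sn * t * (sn / L)) * (B / hh).
  pose b := (c - 1) * s * (B / h) + ((c - 1) * t * ((c - 1) / L) + sn * t * (sn / L)) * (A / h).
  pose d := (c - 1) * t * (- (sn / L)) + sn * t * ((c - 1) / L).
  have -> : ((c - 1) * s) *: Xv + ((c - 1) * t) *: Zv + (sn * t) *: Wv = a *: P + b *: f1 + d *: f2.
    by rewrite eX eZ eW eV /a /b /d; apply/rowP => i; rewrite !mxE; ring.
  have -> : d = 0 by rewrite /d; ring.
  have -> : b = 0.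
    transitivity (A * B * ((1 - c) ^+ 2 + sn ^+ 2 - L ^+ 2) / (h * L ^+ 2)).
      by rewrite /b /t /A; field; rewrite ?hne ?Lne ?hhne.
    by rewrite L2 subrr mulr0 mul0r.
  have -> : a = 1.
    apply/eqP; rewrite -subr_eq0; apply/eqP.
    transitivity ((B ^+ 2 - (hh - A ^+ 2)) / hh + B ^+ 2 * ((1 - c) ^+ 2 + sn ^+ 2 - L ^+ 2) / (L ^+ 2 * hh)).
      by rewrite /a /t /A; field; rewrite ?hne ?Lne ?hhne.
    by rewrite B2 L2 !subrr mulr0 !mul0r addr0.
  by rewrite scale1r !scale0r !addr0.
- rewrite eY scalerA (_ : sn * s * q^-1 = 1) ?scale1r //.
  by rewrite /s; field; rewrite qne snne.
Qed.

Section Std.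
Variable R : realType.
Variable k : nat.
Let n := k.+2.

Lemma std_ltE (y : 'rV[R]_k) (i : 'I_n) (j : 'I_k) : val i = val j -> std_incl n y 0 i = y 0 j.
Proof.
move=> e; rewrite mxE; case: insubP => [j' _ hj|]/=.
  by congr (y 0 _); apply: val_inj; rewrite hj e.
by rewrite e ltn_ord.
Qed.

Lemma std_geE (y : 'rV[R]_k) (i : 'I_n) : (k <= i)%N -> std_incl n y 0 i = 0.
Proof.
move=> e; rewrite mxE; case: insubP => [j' hk hj|]//=.
by move: (ltn_ord j'); rewrite hj ltnNge e.
Qed.

Lemma std_inclB (x y : 'rV[R]_k) : std_incl n (x - y) = std_incl n x - std_incl n y.
Proof.
apply/rowP => i; rewrite !mxE; case: insubP => [j _ _|_] /=; by rewrite ?mxE ?subr0.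
Qed.

Lemma dotp_std (x y : 'rV[R]_k) : dotp (std_incl n x) (std_incl n y) = dotp x y.
Proof.
rewrite /dotp !big_ord_recr /= !(std_geE x) //= !mul0r !addr0.
by apply: eq_bigr => i _; rewrite !(std_ltE _ (j := i)).
Qed.

Definition ev (j : nat) : 'rV[R]_n := \row_(i < n) ((i : nat) == j)%:R.

Lemma dotp_ev (x : 'rV[R]_n) (j : 'I_n) : dotp x (ev j) = x 0 j.
Proof.
rewrite /dotp (bigD1 j) //= big1 => [|i hi]; first by rewrite mxE eqxx mulr1 addr0.
by rewrite mxE (inj_eq val_inj) (negPf hi) mulr0.
Qed.

End Std.

Unset Implicit Arguments.
Set Strict Implicit.

Theorem lemma5 (R : realType) (alpha : R) :
  0 < alpha -> alpha < pi ->
  exists p0 : nat, forall p : nat, prime p -> (p0 < p)%N ->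
    forall (k : nat) (a b c : 'rV[R]_k),
      b != a -> euclid_dist b a = euclid_dist c a ->
      angle_at a b c = alpha ->
      euclidean_sub_p_toral p [set a; b; c].
Proof.
move=> a0 api.
pose x := pi *+ 2 / (pi - alpha).
exists (Num.trunc x).+2 => p pp hp k a b c hba hd hang.
have p1 : (1 < p)%N by apply: prime_gt1.
have em : (Zp_trunc p).+2 = p by rewrite Zp_cast.
have m3 : (3 <= p)%N by apply: leq_trans hp.
have pigt0 : 0 < pi :> R := pi_gt0 R.
have pa : 0 < pi - alpha by rewrite subr_gt0.
have mx : x < p%:R.
  apply: (lt_le_trans (truncnS_gt x)); rewrite ler_nat.
  by apply: leq_trans hp; rewrite leqW.
pose th := theta R p.
have eth : th = pi *+ 2 / p%:R by rewrite /th /theta em.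
have p0R : (0 : R) < p%:R by rewrite ltr0n; apply: leq_trans m3.
have th0 : 0 < th by rewrite eth divr_gt0 // mulrn_wgt0.
have thpi : th < pi.
  rewrite eth ltr_pdivrMr // -(mulr_natr pi 2) ltr_pM2l // ltr_nat.
  exact: m3.
have thle : th <= pi - alpha.
  rewrite eth ler_pdivrMr //; move: mx; rewrite /x ltr_pdivrMr // => h.
  by rewrite mulrC ltW.
pose co := cos th; pose sn := sin th.
have snpos : 0 < sn by apply: sin_gt0_pi; rewrite th0 thpi.
have hcs : co ^+ 2 + sn ^+ 2 = 1 by apply: cos2Dsin2.
have hcos : - cos alpha <= co.
  have -> : - cos alpha = cos (pi - alpha) by rewrite cosB cospi sinpi mul0r addr0 mulN1r.
  rewrite leNgt ltr_cos ?in_itv /= ?(ltW th0) ?(ltW thpi) -?leNgt //.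
  by rewrite (ltW pa) gerBl ltW.
have [u eu0] : exists u : 'rV[R]_k, u = b - a by eexists.
have [v ev0] : exists v : 'rV[R]_k, v = c - a by eexists.
move: hd hang; rewrite /angle_at /euclid_dist -eu0 -ev0 => hd hang.
have Du0 : 0 <= dotp u u by apply: dotpxx_ge0.
have Dv0 : 0 <= dotp v v by apply: dotpxx_ge0.
have eD : dotp v v = dotp u u.
  by rewrite -(sqr_sqrtr Du0) -(sqr_sqrtr Dv0) hd.
have Dpos : 0 < dotp u u.
  rewrite lt_def Du0 andbT; apply/eqP => /dotpxx_eq0 /eqP.
  by rewrite eu0 subr_eq0 (negPf hba).
set D := dotp u u in Du0 eD Dpos *.
move: hang; rewrite /angle_at /euclid_dist -/u -/v eD -/D -expr2 sqr_sqrtr // => hang.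
pose r := dotp u v / D.
have huv : dotp u v = r * D by rewrite /r divfK // gt_eqF.
have hvu : dotp v u = r * D by rewrite dotpC.
have h1 : 0 <= dotp (u - v) (u - v) by apply: dotpxx_ge0.
have h2 : 0 <= dotp (u + v) (u + v) by apply: dotpxx_ge0.
move: h1 h2; dsimp; rewrite -/D eD huv hvu => h1 h2.
have rle : r <= 1 by nra.
have rge : -1 <= r by nra.
have hr : cos alpha = r by rewrite -hang acosK // in_itv /= rle rge.
have rlt : r < 1.
  rewrite lt_neqAle rle andbT; apply/eqP => e.
  by move: hang; rewrite -/r e acos1 => e0; move: a0; rewrite e0 ltxx.
have rgt : -1 < r.
  rewrite lt_neqAle rge andbT; apply/eqP => e.
  by move: hang; rewrite -/r -e acosN1 => e0; move: api; rewrite e0 ltxx.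
rewrite hr in hcos.
pose n := k.+2.
pose A' := std_incl n a; pose B' := std_incl n b; pose C' := std_incl n c.
pose u' := std_incl n u; pose v' := std_incl n v.
have eu : B' = A' + u' by rewrite /u' eu0 std_inclB addrC subrK.
have ev' : C' = A' + v' by rewrite /v' ev0 std_inclB addrC subrK.
have uu : dotp u' u' = D by rewrite dotp_std.
have vv : dotp v' v' = D by rewrite dotp_std.
have uv : dotp u' v' = r * D by rewrite dotp_std.
have vu : dotp v' u' = r * D by rewrite dotp_std.
have kn : (k < n)%N by rewrite /n.
pose i1 : 'I_n := Ordinal kn.
pose i2 : 'I_n := ord_max.
pose f1 := @ev R k i1; pose f2 := @ev R k i2.
have u1 : dotp u' f1 = 0 by rewrite dotp_ev std_geE.
have u2 : dotp u' f2 = 0 by rewrite dotp_ev std_geE.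
have v1 : dotp v' f1 = 0 by rewrite dotp_ev std_geE.
have v2 : dotp v' f2 = 0 by rewrite dotp_ev std_geE.
have f11 : dotp f1 f1 = 1 by rewrite dotp_ev mxE eqxx.
have f22 : dotp f2 f2 = 1 by rewrite dotp_ev mxE eqxx.
have f12 : dotp f1 f2 = 0.
  by rewrite dotp_ev mxE /= (gtn_eqF (ltnSn k)).
pose P := 2^-1 *: (u' + v'); pose Q := 2^-1 *: (u' - v').
have PQ : dotp P Q = 0 by rewrite /P /Q; dsimp; rewrite uu vv uv vu; ring.
have P1 : dotp P f1 = 0 by rewrite /P; dsimp; rewrite u1 v1; ring.
have P2 : dotp P f2 = 0 by rewrite /P; dsimp; rewrite u2 v2; ring.
have Q1 : dotp Q f1 = 0 by rewrite /Q; dsimp; rewrite u1 v1; ring.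
have Q2 : dotp Q f2 = 0 by rewrite /Q; dsimp; rewrite u2 v2; ring.
have PP : dotp P P = D * (1 + r) / 2 by rewrite /P; dsimp; rewrite uu vv uv vu; field.
have QQ : dotp Q Q = D * (1 - r) / 2 by rewrite /Q; dsimp; rewrite uu vv uv vu; field.
have PPpos : 0 < dotp P P by rewrite PP divr_gt0 // mulr_gt0 //; lra.
have QQpos : 0 < dotp Q Q by rewrite QQ divr_gt0 // mulr_gt0 //; lra.
have cond : dotp Q Q * (1 - co) <= dotp P P * (1 + co).
  rewrite PP QQ; have : 0 <= D * (co + r) by apply: mulr_ge0; [exact: ltW | lra].
  nra.
have [X [Y [Z [W [s [t [[hXX hYY hXY hZZ hWW] [hZW hXZ hXW hYZ hYW] eP eQ]]]]]]] :=
  core PQ P1 P2 Q1 Q2 f12 f11 f22 PPpos QQpos snpos hcs cond.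
pose z := A' - (s *: X + t *: Z).
have eA : A' = z + (s *: X + t *: Z) by rewrite /z subrK.
have PQu : P + Q = u' by rewrite /P /Q; apply/rowP => i; rewrite !mxE; field.
have PQv : P - Q = v' by rewrite /P /Q; apply/rowP => i; rewrite !mxE; field.
have iso := actf_iso p z hXX hYY hXY hZZ hWW hZW hXZ hXW hYZ hYW.
exists n, 2%N, (actf X Y Z W z); split => //.
  exact: leq_trans (leqnSn k) (leqnSn k.+1).
exists A' => y [[->|->]|->].
- by exists 0; case: iso => -> _ _.
- exists [ffun => 1]; rewrite -/B' eu -PQu -eP -eQ {1}eA.
  rewrite (actf_orbit z hXX hXY hZZ hZW hXZ hXW hYZ hYW) /= !ffunE.
  rewrite mulr1 -/th -/co -/sn /z; apply/rowP => i; rewrite !mxE; ring.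
- exists [ffun i : 'I_2 => if i == ord0 then (ord_max : 'Z_p) else 1].
  rewrite -/C' ev' -PQv -eP -eQ {1}eA.
  rewrite (actf_orbit z hXX hXY hZZ hZW hXZ hXW hYZ hYW) /= !ffunE /=.
  rewrite modn_small //.
  have -> : theta R p * ((Zp_trunc p).+1)%:R = pi *+ 2 - th.
    rewrite /th /theta -[((Zp_trunc p).+2)%:R]natr1; field; apply/eqP => hh; have := ler0n R (Zp_trunc p); lra.
  rewrite -/th mulr1 cosB sinB cos2pi sin2pi -/co -/sn /z.
  apply/rowP => i; rewrite !mxE; ring.
Qed.
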